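(* Let $N\ge 5$ and let $\mu_1,\dots,\mu_N$ be distinct real numbers. For $z\in\mathbb{C}\setminus\mathbb{R}$ define the vectors in $\mathbb{R}^N$ $$Y_1(z) := \left(\Re \frac{1}{\mu_j - z}\right)_{j=1}^N,\quad Y_2(z) := \left(\Re \frac{1}{(\mu_j - z)^2}\right)_{j=1}^N,\quad Y_3(z) := \left(\Im \frac{1}{(\mu_j - z)^2}\right)_{j=1}^N.$$ Then for every $z\in\mathbb{C}\setminus\mathbb{R}$, $Y_1(z)$ does not belong to the $\mathbb{R}$-linear span of $Y_2(z)$ and $Y_3(z)$. *)

(* Defs.v *)
From Stdlib Require Import Reals.
From Coquelicot Require Import Coquelicot.
Open Scope R_scope.

(* Coordinates j (0 <= j < N) of the vectors Y1(z), Y2(z), Y3(z) in R^N,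
   for a family mu : nat -> R of reals (only indices j < N matter). *)
Definition Y1 (mu : nat -> R) (z : C) (j : nat) : R :=
  Re (Cinv (Cminus (RtoC (mu j)) z)).
Definition Y2 (mu : nat -> R) (z : C) (j : nat) : R :=
  Re (Cinv (Cmult (Cminus (RtoC (mu j)) z) (Cminus (RtoC (mu j)) z))).
Definition Y3 (mu : nat -> R) (z : C) (j : nat) : R :=
  Im (Cinv (Cmult (Cminus (RtoC (mu j)) z) (Cminus (RtoC (mu j)) z))).

Definition in_span2 (N : nat) (v u w : nat -> R) : Prop :=
  exists a b : R, forall j : nat, (j < N)%nat -> v j = a * u j + b * w j.

(* Main.v *)
Require Import Defs.
From Stdlib Require Import Reals Lra Psatz.
From Coquelicot Require Import Coquelicot.
Open Scope R_scope.
Lemma eqn (m x y a b : R) (Hy : y <> 0) :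
  Y1 (fun _ => m) (x,y) 0%nat = a * Y2 (fun _ => m) (x,y) 0%nat + b * Y3 (fun _ => m) (x,y) 0%nat ->
  (m-x)^3 + (m-x)*y^2 - a*((m-x)^2 - y^2) - 2*b*(m-x)*y = 0.
Proof.
  unfold Y1, Y2, Y3; simpl.
  intros H.
  assert (HD : (m + - x) * ((m + - x) * 1) + (0 + - y) * ((0 + - y) * 1) > 0).
  { pose proof (Rsqr_pos_lt y Hy) as Hs; pose proof (Rle_0_sqr (m + - x)) as Hm; unfold Rsqr in *. replace ((m + - x) * ((m + - x) * 1) + (0 + - y) * ((0 + - y) * 1)) with ((m + - x) * (m + - x) + y*y) by ring. lra. }
  set (D := (m + - x) * ((m + - x) * 1) + (0 + - y) * ((0 + - y) * 1)) in *.
  set (E := (((m + - x) * (m + - x) - (0 + - y) * (0 + - y)) *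
      (((m + - x) * (m + - x) - (0 + - y) * (0 + - y)) * 1) +
      ((m + - x) * (0 + - y) + (0 + - y) * (m + - x)) *
      (((m + - x) * (0 + - y) + (0 + - y) * (m + - x)) * 1))) in *.
  assert (HE : E = D * D) by (unfold E, D; ring).
  rewrite HE in H.
  set (L := (m + - x) / D) in H.
  set (R1 := (((m + - x) * (m + - x) - (0 + - y) * (0 + - y)) / (D*D))) in H.
  set (R2 := (- ((m + - x) * (0 + - y) + (0 + - y) * (m + - x)) / (D*D))) in H.
  assert (Hk : (m-x)^3 + (m-x)*y^2 - a*((m-x)^2 - y^2) - 2*b*(m-x)*y
     = D*D*(L - (a*R1 + b*R2))).
  { unfold L, R1, R2, D in *. field. lra. }
  simpl in Hk. rewrite Hk, H. ring.
Qed.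

Lemma cubic4 (p q r t1 t2 t3 t4 : R) :
  t1 <> t2 -> t1 <> t3 -> t1 <> t4 -> t2 <> t3 -> t2 <> t4 -> t3 <> t4 ->
  t1^3 + p*t1^2 + q*t1 + r = 0 -> t2^3 + p*t2^2 + q*t2 + r = 0 ->
  t3^3 + p*t3^2 + q*t3 + r = 0 -> t4^3 + p*t4^2 + q*t4 + r = 0 -> False.
Proof.
  intros d12 d13 d14 d23 d24 d34 h1 h2 h3 h4.
  assert (Q2 : t1^2+t1*t2+t2^2 + p*(t1+t2) + q = 0).
  { apply (Rmult_eq_reg_l (t1 - t2)); [|lra]. ring_simplify. nra. }
  assert (Q3 : t1^2+t1*t3+t3^2 + p*(t1+t3) + q = 0).
  { apply (Rmult_eq_reg_l (t1 - t3)); [|lra]. ring_simplify. nra. }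
  assert (Q4 : t1^2+t1*t4+t4^2 + p*(t1+t4) + q = 0).
  { apply (Rmult_eq_reg_l (t1 - t4)); [|lra]. ring_simplify. nra. }
  assert (S3 : t1+t2+t3+p = 0).
  { apply (Rmult_eq_reg_l (t2 - t3)); [|lra]. ring_simplify. nra. }
  assert (S4 : t1+t2+t4+p = 0).
  { apply (Rmult_eq_reg_l (t2 - t4)); [|lra]. ring_simplify. nra. }
  lra.
Qed.

Theorem lemma1p4 (N : nat) (mu : nat -> R)
  (HN : (5 <= N)%nat)
  (Hdist : forall i j : nat, (i < N)%nat -> (j < N)%nat -> i <> j -> mu i <> mu j)
  (z : C) (Hz : Im z <> 0) :
  ~ in_span2 N (Y1 mu z) (Y2 mu z) (Y3 mu z).
Proof.
  intros [a [b H]].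
  destruct z as [x y]. simpl in Hz.
  assert (K : forall j, (j < N)%nat ->
    (mu j - x)^3 + (-a) * (mu j - x)^2 + (y^2 - 2*b*y) * (mu j - x) + a*y^2 = 0).
  { intros j hj. pose proof (eqn (mu j) x y a b Hz (H j hj)) as E.
    rewrite <- E. ring. }
  apply (cubic4 (-a) (y^2 - 2*b*y) (a*y^2) (mu 0%nat - x) (mu 1%nat - x) (mu 2%nat - x) (mu 3%nat - x));
  try (apply K; lia).
  all: intro C0.
  - apply (Hdist 0%nat 1%nat); try lia; lra.
  - apply (Hdist 0%nat 2%nat); try lia; lra.
  - apply (Hdist 0%nat 3%nat); try lia; lra.
  - apply (Hdist 1%nat 2%nat); try lia; lra.
  - apply (Hdist 1%nat 3%nat); try lia; lra.
  - apply (Hdist 2%nat 3%nat); try lia; lra.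
Qed.
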